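(* Let $k$ be a field of characteristic $0$, $R = k[t_1, \dots, t_n]$, and let $x_1, \dots, x_m \in (k^* )^n$ with $x_i = (x_{i,1}, \dots, x_{i,n})$. Let $\mathfrak{m} = (t_1 - 1, \dots, t_n - 1) \subset R$, let $\mathfrak{p} \subset \mathfrak{m}$ be a prime ideal of height $n'$, and let $A = \operatorname{Stab}_X(\mathfrak{p})$. Then there exists a subgroup $B \subset \mathbf{Z}^n$ of rank at least $n'$ such that $\langle a, b \rangle_X = 1$ for all $a \in A$ and $b \in B$.
   Context: For $a \in \mathbf{Z}^m$ write $x^a = \prod_{i=1}^m x_i^{a_i} \in (k^* )^n$ (coordinatewise). An element $z = (z_1,\dots,z_n) \in (k^* )^n$ acts on $R$ by $(z\cdot f)(t_1,\dots,t_n) = f(z_1t_1, \dots, z_nt_n)$, and for an ideal $\mathfrak{p}$, $\operatorname{Stab}_X(\mathfrak{p}) = \{a \in \mathbf{Z}^m : x^a \cdot \mathfrak{p} = \mathfrak{p}\}$. The pairing $\langle\cdot,\cdot\rangle_X: \mathbf{Z}^m \times \mathbf{Z}^n \to k^*$ is $\langle (a_i), (b_j) \rangle_X = \prod_{i,j} x_{i,j}^{a_i b_j}$. *)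

(* Defs.v *)
From mathcomp Require Import all_boot all_algebra mpoly.
Set Implicit Arguments. Unset Strict Implicit. Unset Printing Implicit Defensive.
Import GRing.Theory.
Local Open Scope ring_scope.

Section Defs.
Variables (k : fieldType) (n : nat).
Local Notation R := {mpoly k[n]}.

Definition is_ideal (I : R -> Prop) : Prop :=
  [/\ I 0, (forall f g, I f -> I g -> I (f + g)) & (forall r f, I f -> I (r * f))].

Definition is_prime_ideal (I : R -> Prop) : Prop :=
  [/\ is_ideal I, ~ I 1 & (forall f g, I (f * g) -> I f \/ I g)].

Definition subideal (I J : R -> Prop) : Prop := forall f, I f -> J f.
Definition strict_subideal (I J : R -> Prop) : Prop := subideal I J /\ ~ subideal J I.

Definition prime_chain_to (p : R -> Prop) (h : nat) (c : nat -> R -> Prop) : Prop :=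
  [/\ forall i, (i <= h)%N -> is_prime_ideal (c i),
      forall i, (i < h)%N -> strict_subideal (c i) (c i.+1)
    & forall f, c h f <-> p f].

Definition prime_height (p : R -> Prop) (h : nat) : Prop :=
  (exists c, prime_chain_to p h c) /\ (forall h' c, prime_chain_to p h' c -> (h' <= h)%N).

Definition ideal_gen (r : nat) (g : 'I_r -> R) (f : R) : Prop :=
  exists c : 'I_r -> R, f = \sum_(i < r) c i * g i.

Definition max_ideal_one : R -> Prop := ideal_gen (fun i : 'I_n => 'X_i - 1).

Definition torus_act (z : 'I_n -> k) (f : R) : R :=
  comp_mpoly [tuple z i *: 'X_i | i < n] f.

Definition xpow (m : nat) (x : 'I_m -> 'I_n -> k) (a : 'rV[int]_m) : 'I_n -> k :=
  fun j => \prod_(i < m) x i j ^ (a 0 i).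

Definition act_fixes (z : 'I_n -> k) (p : R -> Prop) : Prop :=
  (forall f, p f -> p (torus_act z f)) /\
  (forall g, p g -> exists f, p f /\ g = torus_act z f).

Definition Stab (m : nat) (x : 'I_m -> 'I_n -> k) (p : R -> Prop) (a : 'rV[int]_m) : Prop :=
  act_fixes (xpow x a) p.

Definition pairing (m : nat) (x : 'I_m -> 'I_n -> k) (a : 'rV[int]_m) (b : 'rV[int]_n) : k :=
  \prod_(i < m) \prod_(j < n) x i j ^ (a 0 i * b 0 j).

End Defs.

Definition is_subgroup (n : nat) (B : 'rV[int]_n -> Prop) : Prop :=
  [/\ B 0, (forall u v, B u -> B v -> B (u + v)) & (forall u, B u -> B (- u))].

(* rank of a subgroup B of Z^n is at least r: B contains r Z-linearly
   independent vectors (independence tested over Q) *)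
Definition rank_at_least (n : nat) (B : 'rV[int]_n -> Prop) (r : nat) : Prop :=
  exists v : 'I_r -> 'rV[int]_n, (forall i, B (v i)) /\
    \rank (\matrix_(i < r, j < n) ((v i 0 j)%:~R : rat)) = r.

(* Main.v *)
Require Import Defs.
From Stdlib Require Import Classical.
From mathcomp Require Import all_boot all_algebra mpoly ring zify.
Set Implicit Arguments. Unset Strict Implicit. Unset Printing Implicit Defensive.
Import GRing.Theory.
Local Open Scope ring_scope.


Section Torus.
Variables (k : fieldType) (n : nat).
Local Notation R := {mpoly k[n]}.

Lemma torus_actE (z : 'I_n -> k) (f : R) :
  torus_act z f = \sum_(m <- msupp f) (f@_m * \prod_(i < n) z i ^+ m i) *: 'X_[m].
Proof.
rewrite /torus_act comp_mpolyE; apply: eq_bigr => m _.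
rewrite -scalerA; congr (_ *: _).
rewrite mpolyXE_id -scaler_prod; apply: eq_bigr => i _.
by rewrite tnth_map tnth_ord_tuple exprZn.
Qed.

Lemma torus_act_coef (z : 'I_n -> k) (f : R) m :
  (torus_act z f)@_m = f@_m * \prod_(i < n) z i ^+ m i.
Proof.
rewrite torus_actE raddf_sum /=.
under eq_bigr => m' _ do rewrite mcoeffZ mcoeffX.
case: (boolP (m \in msupp f)) => hm.
  rewrite (bigD1_seq m hm (msupp_uniq f)) /=. rewrite eqxx [_ * true%:R]mulr1 [X in _ + X]big1 ?addr0 //.
  by move=> m' /negPf ->; rewrite mulr0.
rewrite big_seq [LHS]big1; last first.
  by move=> m' hm'; case: eqP hm => [<- /negP//|_ _]; rewrite mulr0.
by move: hm; rewrite mcoeff_msupp negbK => /eqP->; rewrite mul0r.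
Qed.

Lemma torus_act_comp (z w : 'I_n -> k) (f : R) :
  torus_act z (torus_act w f) = torus_act (fun i => w i * z i) f.
Proof.
apply/mpolyP => m; rewrite !torus_act_coef -mulrA; congr (_ * _).
by rewrite -big_split /=; apply: eq_bigr => i _; rewrite exprMn.
Qed.

Lemma torus_act1 (f : R) : torus_act (fun _ => 1) f = f.
Proof.
apply/mpolyP => m; rewrite torus_act_coef big1 ?mulr1 // => i _; exact: expr1n.
Qed.

Lemma torus_act_eval (z : 'I_n -> k) (f : R) :
  (torus_act z f).@[fun _ => 1] = f.@[z].
Proof.
rewrite torus_actE raddf_sum /= [RHS]mevalE; apply: eq_bigr => m _.
rewrite mevalZ mevalX.
by under [X in _ * X = _]eq_bigr do rewrite expr1n; rewrite big1_eq mulr1.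
Qed.

Lemma max_ideal_eval (f : R) : max_ideal_one f -> f.@[fun _ => 1] = 0.
Proof.
case=> c ->; rewrite raddf_sum /= big1 // => i _.
by rewrite mevalM mevalB mevalXU meval1 subrr mulr0.
Qed.

End Torus.


Section Artin.
Variables (k : fieldType) (V : zmodType) (G : V -> Prop) (I : finType)
  (chi : I -> V -> k) (a0 : V).
Hypotheses (GD : forall a b, G a -> G b -> G (a + b)) (Ga0 : G a0)
  (chiM : forall i a b, chi i (a + b) = chi i a * chi i b)
  (chi0 : forall i a, chi i a != 0)
  (chiD : forall i j, i != j -> exists a, G a /\ chi i a != chi j a).

Lemma artin_aux N (S : {set I}) (c : I -> k) : (#|S| <= N)%N ->
  (forall i, i \notin S -> c i = 0) ->
  (forall a, G a -> \sum_i c i * chi i a = 0) -> forall i, c i = 0.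
Proof.
elim: N S c => [|N IH] S c hS hc hrel.
  move=> i; apply: hc; move: hS; rewrite leqn0 cards_eq0 => /eqP->.
  by rewrite inE.
have [S0|[i0 i0S]] := set_0Vmem S.
  by move=> i; apply: hc; rewrite S0 inE.
have others : forall i1, i1 != i0 -> c i1 = 0.
  move=> i1 ne; have [g [Gg hg]] := chiD ne.
  pose c' i := c i * (chi i g - chi i0 g).
  suff: c' i1 = 0.
    rewrite /c' => /eqP; rewrite mulf_eq0 subr_eq0 (negPf hg) orbF.
    by move/eqP.
  apply: (IH (S :\ i0)).
  - by rewrite -ltnS (leq_trans _ hS) // (cardsD1 i0 S) i0S.
  - move=> i; rewrite !inE negb_and negbK /c' => /orP[/eqP->|/hc->].
      by rewrite subrr mulr0.
    by rewrite mul0r.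
  - move=> a Ga; rewrite /c'.
    have h1 := hrel _ (GD Ga Gg); have h2 := hrel _ Ga.
    transitivity (\sum_i c i * chi i (a + g) - chi i0 g * \sum_i c i * chi i a).
      rewrite mulr_sumr -sumrB; apply: eq_bigr => i _.
      by rewrite chiM; ring.
    by rewrite h1 h2 mulr0 subr0.
move=> i; case: (eqVneq i i0) => [->|]; last exact: others.
have := hrel _ Ga0; rewrite (bigD1 i0) //= big1 ?addr0.
  by move/eqP; rewrite mulf_eq0 (negPf (chi0 _ _)) orbF => /eqP.
by move=> j /others ->; rewrite mul0r.
Qed.

Lemma artin (c : I -> k) : (forall a, G a -> \sum_i c i * chi i a = 0) ->
  forall i, c i = 0.
Proof.
move=> h; apply: (@artin_aux #|[set: I]| [set: I]) => // i; by rewrite inE.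
Qed.

End Artin.


Section Growth.
Variables (k : fieldType) (n : nat).
Local Notation R := {mpoly k[n]}.

Definition Gr (P : R -> Prop) (M K : nat) : Prop :=
  exists (I : finType) (f : I -> R), [/\ #|I| = K,
    (forall i, msize (f i) <= M)%N &
    (forall c : I -> k, P (\sum_i c i *: f i) -> forall i, c i = 0)].

Lemma Gr_mono P M M' K : Gr P M K -> (M <= M')%N -> Gr P M' K.
Proof.
case=> I [f [hI hf hc]] le; exists I, f; split => // i.
exact: leq_trans (hf i) le.
Qed.

Lemma Gr_0 P M : Gr P M 0.
Proof.
exists 'I_0, (fun _ => 0); split => //; first by rewrite card_ord.
  by move=> _; rewrite msize0.
by move=> c _ [].
Qed.

Lemma Gr_ext P P' M K : (forall f, P f <-> P' f) -> Gr P M K -> Gr P' M K.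
Proof.
move=> e [I [f [hI hf hc]]]; exists I, f; split => // c /e; exact: hc.
Qed.

Lemma Gr_combine P Q q M M' K1 K2 :
  is_prime_ideal P -> is_ideal Q -> subideal P Q -> Q q -> ~ P q ->
  Gr Q M K1 -> Gr P M' K2 -> (M' + (msize q).+1 <= M)%N -> Gr P M (K1 + K2).
Proof.
rewrite /is_prime_ideal /is_ideal.
move=> [[P0 PD PM] P1 Pp] [Q0 QD QM] PQ Qq Pq [I1 [f1 [h1 hf1 hc1]]]
  [I2 [f2 [h2 hf2 hc2]]] hM.
exists (I1 + I2)%type, (fun i => match i with inl i => f1 i | inr j => q * f2 j end).
split.
- by rewrite card_sum h1 h2.
- case=> [i|j] /=.
    exact: hf1.
  apply: leq_trans (msizeM_le _ _) _; apply: leq_trans hM.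
  by have := hf2 j; rewrite addnS ltnS addnC leq_add2r.
move=> c; rewrite big_sumType /=.
set u := \sum_(i : I1) _; set w := \sum_(j : I2) c (inr j) *: f2 j.
have -> : \sum_(j : I2) c (inr j) *: (q * f2 j) = w * q.
  rewrite mulr_suml; apply: eq_bigr => j _.
  by rewrite -scalerAl mulrC.
move=> Puw.
have Qu : Q u.
  have -> : u = (u + w * q) + (- 1) * (w * q) by rewrite mulN1r addrK.
  by apply: QD; [exact: PQ | exact: (QM _ _ (QM _ _ Qq))].
have cl : forall i, c (inl i) = 0 by apply: hc1.
have u0 : u = 0 by rewrite /u big1 // => i _; rewrite cl scale0r.
have : P (w * q) by rewrite -[w * q]add0r -u0.
case/Pp => [Pw|//] [i|j]; first exact: cl.
exact: (hc2 (fun j => c (inr j))).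
Qed.

Lemma Gr_iter P Q q M K :
  is_prime_ideal P -> is_ideal Q -> subideal P Q -> Q q -> ~ P q ->
  Gr Q M K -> forall j, Gr P (M + j * (msize q).+1) (j * K).
Proof.
move=> hP hQ PQ Qq Pq GQ; elim=> [|j IH]; first by rewrite mul0n; exact: Gr_0.
rewrite mulSn addnC; apply: (Gr_combine hP hQ PQ Qq Pq _ IH).
  by apply: Gr_mono GQ _; rewrite leq_addl.
by lia.
Qed.

Lemma mdeg_ge (mm : 'X_{1..n}) j : (mm j <= mdeg mm)%N.
Proof. by rewrite mdegE (bigD1 j) //= leq_addr. Qed.

Lemma Gr_upper P M K : is_ideal P -> Gr P M.+1 K -> (K <= M.+1 ^ n)%N.
Proof.
case=> P0 _ _ [I [f [<- hf hc]]].
pose D := {ffun 'I_n -> 'I_M.+1}.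
pose mono (d : D) : 'X_{1..n} := [multinom (d j : nat) | j < n].
pose A : 'M[k]_(#|I|, #|D|) :=
  \matrix_(i, d) (f (enum_val i))@_(mono (enum_val d)).
have rf : row_free A.
  apply/inj_row_free => v hv.
  pose c (i : I) := v 0 (enum_rank i).
  have Fe : \sum_i c i *: f i = \sum_(i : 'I_#|I|) v 0 i *: f (enum_val i).
    rewrite (reindex _ (onW_bij _ (enum_val_bij I))).
    by apply: eq_bigr => i _; rewrite /c enum_valK.
  have F0 : \sum_(i : 'I_#|I|) v 0 i *: f (enum_val i) = 0.
    apply/mpolyP => mm; rewrite mcoeff0 raddf_sum /=.
    case: (boolP [forall j, (mm j <= M)%N]) => hb.
    - pose d : D := [ffun j => inord (mm j)].
      have md : mono d = mm.
        apply/mnmP => j; rewrite mnmE ffunE inordK // ltnS.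
        by move/forallP: hb.
      have := congr1 (fun u : 'rV_ _ => u 0 (enum_rank d)) hv.
      rewrite !mxE /= => h0; apply: etrans h0; apply: eq_bigr => i _.
      by rewrite mcoeffZ mxE enum_rankK md.
    - move/forallPn: hb => [j]; rewrite -ltnNge => hj.
      rewrite big1 // => i _; rewrite mcoeffZ.
      have : mm \notin msupp (f (enum_val i)).
        apply: msize_mdeg_ge; apply: leq_trans (hf _) _.
        exact: leq_trans hj (mdeg_ge mm j).
      by rewrite mcoeff_msupp negbK => /eqP->; rewrite mulr0.
  have hc' := hc c; rewrite Fe F0 in hc'.
  apply/rowP => i; rewrite mxE; have := hc' P0 (enum_val i).
  by rewrite /c enum_valK.
move/eqP: rf => <-; apply: leq_trans (rank_leq_col A) _.
by rewrite card_ffun !card_ord.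
Qed.

Definition growth (P : R -> Prop) (s : nat) : Prop :=
  exists a c0, (0 < a)%N /\ forall N, exists K,
    (N ^ s <= c0 * K)%N /\ Gr P (a * N).+1 K.

Lemma growth_ext P P' s : (forall f, P f <-> P' f) -> growth P s -> growth P' s.
Proof.
move=> e [a [c0 [a0 h]]]; exists a, c0; split => // N.
have [K [h1 h2]] := h N; exists K; split => //; exact: Gr_ext h2.
Qed.

Lemma growth_step P Q q s :
  is_prime_ideal P -> is_ideal Q -> subideal P Q -> Q q -> ~ P q ->
  growth Q s -> growth P s.+1.
Proof.
move=> hP hQ PQ Qq Pq [a [c0 [a0 h]]].
set e := (msize q).+1.
exists (a * e.+1)%N, c0; split; first by rewrite muln_gt0 a0.
move=> N; have [K [h1 h2]] := h N.
exists (a * N * K)%N; split.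
  rewrite expnSr mulnC (mulnC c0) -mulnA.
  apply: leq_mul; last by rewrite mulnC.
  by rewrite leq_pmull.
have := Gr_iter hP hQ PQ Qq Pq h2 (a * N).
have -> : ((a * N).+1 + a * N * e = (a * e.+1 * N).+1)%N.
  by rewrite mulnS; lia.
done.
Qed.

Lemma leq_expr (a b e : nat) : (a <= b)%N -> (a ^ e <= b ^ e)%N.
Proof. by move=> h; elim: e => // e IH; rewrite !expnS leq_mul. Qed.

Lemma growth_upper P s : is_ideal P -> growth P s -> (s <= n)%N.
Proof.
move=> hP [a [c0 [a0 h]]].
rewrite leqNgt; apply/negP => hs.
pose N := (c0 * (2 * a) ^ n).+1.
have [K [h1 h2]] := h N.
have hK := Gr_upper hP h2.
have N0 : (0 < N)%N by [].
have e1 : (N ^ n.+1 <= c0 * (2 * a * N) ^ n)%N.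
  apply: leq_trans (leq_pexp2l N0 hs) _.
  apply: leq_trans h1 _; rewrite leq_mul2l; apply/orP; right.
  apply: leq_trans hK _; apply: leq_expr.
  by rewrite -mulnA mul2n -addnn -addn1 leq_add2l muln_gt0 a0.
move: e1; rewrite expnS !expnMn mulnA leq_pmul2r ?expn_gt0 ?N0 //.
by rewrite /N -expnMn ltnn.
Qed.

Lemma chain_bound p h c s : prime_chain_to p h c -> growth p s -> (s + h <= n)%N.
Proof.
case=> hpr hstr heq gp.
have key : forall j, (j <= h)%N -> growth (c (h - j)%N) (s + j).
  elim=> [|j IH] hj.
    by rewrite subn0 addn0; apply: growth_ext gp => f; split => /heq.
  have hi : (h - j.+1 < h)%N by lia.
  have e : (h - j.+1).+1 = (h - j)%N by lia.
  have [sub nsub] := hstr _ hi; rewrite e in sub nsub.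
  have [q [Qq Pq]] : exists q, c (h - j)%N q /\ ~ c (h - j.+1)%N q.
    apply: NNPP => hn; apply: nsub => f Qf; apply: NNPP => Pf.
    by apply: hn; exists f.
  rewrite addnS; apply: (growth_step (hpr _ _) _ sub Qq Pq).
  - lia.
  - by case: (hpr (h - j)%N (leq_subr _ _)).
  - exact: IH (ltnW hj).
have := key h (leqnn h); rewrite subnn.
by apply: growth_upper; case: (hpr 0%N (leq0n _)).
Qed.

Lemma growth_monomials P (C : {set 'I_n}) :
  (forall (I : finType) (e : I -> 'X_{1..n}), injective e ->
     (forall i j, j \notin C -> e i j = 0%N) ->
     forall c : I -> k, P (\sum_i c i *: 'X_[e i]) -> forall i, c i = 0) ->
  growth P #|C|.
Proof.
move=> hyp; exists #|C|.+1, 1%N; split => // N.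
pose S := {j : 'I_n | j \in C}.
pose I := {ffun S -> 'I_N.+1}.
pose e (phi : I) : 'X_{1..n} :=
  [multinom (if @insub _ _ S j is Some j' then (phi j' : nat) else 0%N) | j < n].
have cS : #|{: S}| = #|C| by rewrite card_sig; apply: eq_card => j.
exists #|I|; split.
  by rewrite mul1n card_ffun card_ord cS leq_expr.
exists I, (fun phi => 'X_[e phi]); split => //.
  move=> phi; rewrite msizeX ltnS mdegE.
  apply: leq_trans (_ : (\sum_(j < n) (if j \in C then N else 0) <= _)%N).
    apply: leq_sum => j _; rewrite mnmE; case: insubP => [j' jC _|/negPf ->] //.
    by rewrite jC -ltnS.
  rewrite -big_mkcond sum_nat_const /= leq_mul2r leqnSn orbT //.
apply: hyp.
  move=> phi psi h; apply/ffunP => j'.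
  have := congr1 (fun m : 'X_{1..n} => m (val j')) h; rewrite /e !mnmE valK.
  by move/ord_inj.
by move=> phi j /negPf jC; rewrite mnmE insubF.
Qed.

End Growth.


Section Pair.
Variables (k : fieldType) (n m : nat) (x : 'I_m -> 'I_n -> k).
Hypothesis hx : forall i j, x i j != 0.
Variable p : {mpoly k[n]} -> Prop.

Lemma pairingDr a b1 b2 : pairing x a (b1 + b2) = pairing x a b1 * pairing x a b2.
Proof.
rewrite /pairing -big_split; apply: eq_bigr => i _.
rewrite -big_split; apply: eq_bigr => j _.
by rewrite mxE mulrDr expfzDr.
Qed.

Lemma pairingDl a1 a2 b : pairing x (a1 + a2) b = pairing x a1 b * pairing x a2 b.
Proof.
rewrite /pairing -big_split; apply: eq_bigr => i _.
rewrite -big_split; apply: eq_bigr => j _.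
by rewrite mxE mulrDl expfzDr.
Qed.

Lemma pairing0r a : pairing x a 0 = 1.
Proof.
rewrite /pairing big1 // => i _; rewrite big1 // => j _.
by rewrite mxE mulr0 expr0z.
Qed.

Lemma pairing_neq0 a b : pairing x a b != 0.
Proof.
apply/prodf_neq0 => i _; apply/prodf_neq0 => j _; exact: expfz_neq0.
Qed.

Lemma xpowD a1 a2 j : xpow x (a1 + a2) j = xpow x a1 j * xpow x a2 j.
Proof.
rewrite /xpow -big_split; apply: eq_bigr => i _.
by rewrite mxE expfzDr.
Qed.

Lemma xpow0 j : xpow x 0 j = 1.
Proof. by rewrite /xpow big1 // => i _; rewrite mxE expr0z. Qed.

Lemma torus_act_ext (z z' : 'I_n -> k) f : z =1 z' -> torus_act z f = torus_act z' f.
Proof.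
move=> e; apply/mpolyP => mm; rewrite !torus_act_coef; congr (_ * _).
by apply: eq_bigr => i _; rewrite e.
Qed.

Lemma Stab0 : Stab x p 0.
Proof.
have e : forall f, torus_act (xpow x 0) f = f.
  by move=> f; rewrite (torus_act_ext f (z' := fun _ => 1)) ?torus_act1 // => j; rewrite xpow0.
by split => [f|g]; rewrite ?e // => pg; exists g; rewrite e.
Qed.

Lemma StabD a1 a2 : Stab x p a1 -> Stab x p a2 -> Stab x p (a1 + a2).
Proof.
have e : forall f, torus_act (xpow x (a1 + a2)) f =
                   torus_act (xpow x a2) (torus_act (xpow x a1) f).
  by move=> f; rewrite torus_act_comp; apply: torus_act_ext => j; rewrite xpowD.
move=> [h1 h1'] [h2 h2']; split => [f pf|g pg]; first by rewrite e; apply/h2/h1.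
have [f1 [pf1 ->]] := h2' g pg; have [f2 [pf2 ->]] := h1' f1 pf1.
by exists f2; rewrite e.
Qed.

Definition bv (mm : 'X_{1..n}) : 'rV[int]_n := \row_j (mm j)%:Z.

Lemma eval_mono (mm : 'X_{1..n}) a : ('X_[mm]).@[xpow x a] = pairing x a (bv mm).
Proof.
rewrite mevalX /pairing exchange_big /=; apply: eq_bigr => j _.
rewrite /xpow -prodrXl; apply: eq_bigr => i _.
by rewrite mxE -exprz_exp.
Qed.

Lemma indep_monomials (C : {set 'I_n}) :
  is_ideal p -> subideal p (@max_ideal_one k n) ->
  (forall mm1 mm2 : 'X_{1..n}, (forall j, j \notin C -> mm1 j = 0%N) ->
     (forall j, j \notin C -> mm2 j = 0%N) ->
     (forall a, Stab x p a -> pairing x a (bv mm1) = pairing x a (bv mm2)) ->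
     mm1 = mm2) ->
  forall (I : finType) (e : I -> 'X_{1..n}), injective e ->
     (forall i j, j \notin C -> e i j = 0%N) ->
     forall c : I -> k, p (\sum_i c i *: 'X_[e i]) -> forall i, c i = 0.
Proof.
move=> hp hpm hsep I e inje supp c pF.
apply: (@artin k _ (Stab x p) I (fun i a => pairing x a (bv (e i))) 0).
- exact: StabD.
- exact: Stab0.
- by move=> i a b; rewrite pairingDl.
- by move=> i a; exact: pairing_neq0.
- move=> i j ne; apply: NNPP => hn; move/eqP: ne; apply.
  apply: inje; apply: hsep; try by move=> l; apply: supp.
  move=> a Sa; apply: NNPP => hne; apply: hn; exists a; split => //.
  exact/eqP.
- move=> a [Sa _].
  have := max_ideal_eval (hpm _ (Sa _ pF)).
  rewrite torus_act_eval raddf_sum /= => h0; apply: etrans h0; apply: eq_bigr => i _.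
  by rewrite mevalZ eval_mono.
Qed.

End Pair.


Lemma pivot_zero (r n : nat) (Vm : 'M[rat]_(r, n)) (u : 'rV_n) :
  \rank Vm = r -> (u <= Vm)%MS ->
  (forall i, u 0 (maxrankfun Vm^T i) = 0) -> u = 0.
Proof.
move=> hr /submxP [D ->] hu.
set f := maxrankfun Vm^T.
pose W := (rowsub f Vm^T)^T.
have rW : row_free W.
  rewrite /row_free mxrank_tr.
  have := maxrowsub_free Vm^T; rewrite /row_free => /eqP h.
  by apply/eqP; rewrite h mxrank_tr hr.
suff : D *m W = 0 by move/eqP; rewrite mulmx_free_eq0 // => /eqP->; rewrite mul0mx.
apply/rowP => i; rewrite [RHS]mxE -[RHS](hu i) !mxE; apply: eq_bigr => l _.
by rewrite !mxE.
Qed.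

Lemma rank_ext (r n : nat) (Vm : 'M[rat]_(r, n)) (bq : 'rV_n) (M' : 'M_(r.+1, n)) :
  \rank Vm = r -> ~~ (bq <= Vm)%MS ->
  (forall i, row (lift ord_max i) M' = row i Vm) -> row ord_max M' = bq ->
  \rank M' = r.+1.
Proof.
move=> hr nb hrow hlast.
apply/eqP; rewrite eqn_leq rank_leq_row /=.
have sub : (Vm + bq <= M')%MS.
  rewrite addsmx_sub; apply/andP; split.
    by apply/row_subP => i; rewrite -hrow row_sub.
  by rewrite -hlast row_sub.
apply: leq_trans (mxrankS sub).
have : (Vm < Vm + bq)%MS.
  rewrite ltmxE addsmxSl /=; apply: contra nb => h.
  exact: submx_trans (addsmxSr _ _) h.
by rewrite ltmxErank => /andP[_]; rewrite hr.
Qed.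


Unset Implicit Arguments.

Theorem lemma5p9 (k : fieldType) (n m : nat) (x : 'I_m -> 'I_n -> k)
  (p : {mpoly k[n]} -> Prop) (n' : nat) :
  [pchar k] =i pred0 ->
  (forall i j, x i j != 0) ->
  is_prime_ideal p ->
  subideal p (@max_ideal_one k n) ->
  prime_height p n' ->
  exists B : 'rV[int]_n -> Prop,
    [/\ is_subgroup B, rank_at_least B n' &
        forall a b, Stab x p a -> B b -> pairing x a b = 1].
Proof.
move=> _ hx hP hpm hh.
have hI : is_ideal p by case: hP.
pose B := fun b => forall a, Stab x p a -> pairing x a b = 1.
exists B; split; last by move=> a b Sa Bb; exact: Bb.
  split.
  - by move=> a _; exact: pairing0r.
  - by move=> u v hu hv a Sa; rewrite pairingDr // hu ?hv ?mulr1.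
  - move=> u hu a Sa; have := pairingDr hx a (-u) u.
    by rewrite addNr pairing0r hu // mulr1 => <-.
suff : forall r, (r <= n')%N -> rank_at_least B r by apply.
elim=> [|r IH] hr.
  exists (fun _ => 0); split => [[]//|].
  by apply/eqP; rewrite -leqn0 rank_leq_row.
have [v [Bv hrk]] := IH (ltnW hr).
set Vm := \matrix_(i < r, j < n) ((v i 0 j)%:~R : rat) in hrk.
pose ratv (b : 'rV[int]_n) : 'rV[rat]_n := \row_j ((b 0 j)%:~R).
case: (classic (exists b, B b /\ ~~ (ratv b <= Vm)%MS)) => [[b [Bb nb]]|hall].
  exists (fun i : 'I_r.+1 => if unlift ord_max i is Some i' then v i' else b); split.
    by move=> i; case: unlift.
  apply: (rank_ext hrk nb).
  - by move=> i; apply/rowP => j; rewrite !mxE liftK.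
  - by apply/rowP => j; rewrite !mxE unlift_none.
exfalso.
have hall' : forall b, B b -> (ratv b <= Vm)%MS.
  move=> b Bb; apply: NNPP => nb; apply: hall; exists b; split => //.
  exact/negP.
set f := maxrankfun Vm^T.
pose C := ~: [set f i | i in [set: 'I_(\rank Vm^T)]].
have cC : #|C| = (n - r)%N.
  have := cardsC [set f i | i in [set: 'I_(\rank Vm^T)]].
  rewrite card_imset; last exact: maxrankfun_inj.
  rewrite -/C cardsT card_ord card_ord => h.
  have e : \rank Vm^T = r by rewrite mxrank_tr hrk.
  lia.
have gp : growth p #|C|.
  apply: growth_monomials; apply: (indep_monomials (C := C) hx hI hpm).
  move=> mm1 mm2 s1 s2 heq.
  have Bd : B (bv mm1 - bv mm2).
    move=> a Sa; have := pairingDr hx a (bv mm1 - bv mm2) (bv mm2).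
    rewrite subrK heq // => h.
    by apply: (mulIf (pairing_neq0 hx a (bv mm2))); rewrite mul1r -h.
  have u0 : ratv (bv mm1 - bv mm2) = 0.
    apply: (pivot_zero hrk (hall' _ Bd)) => i.
    have fC : f i \notin C by rewrite inE negbK; apply/imsetP; exists i.
    by rewrite !mxE (s1 _ fC) (s2 _ fC) subrr.
  apply/mnmP => j; have := congr1 (fun u : 'rV_n => u 0 j) u0.
  by rewrite !mxE => /eqP; rewrite intr_eq0 subr_eq0 eqz_nat => /eqP.
have [[c hc] _] := hh.
have := chain_bound hc gp; rewrite cC.
have := rank_leq_col Vm; rewrite hrk; lia.
Qed.
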